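(* Let $G=(V,E)$ be a finite graph with boundary $B\subseteq V$, $|B|\ge 2$. Let $L$ be the Laplacian matrix of $G$ and let $N$ be the principal submatrix of $L$ indexed by $B$, with eigenvalues $\mu_1(N)\le\mu_2(N)\le\cdots\le\mu_{|B|}(N)$. Then $$\sigma_k(G,B)\le\mu_k(N),\qquad k=1,2,\ldots,|B|.$$
   Context: $G=(V,E)$ is a finite undirected graph. A boundary is a subset $B\subseteq V$ with $|B|\ge2$. The Laplacian matrix is $L=D-A$, where $D$ is the diagonal degree matrix and $A$ the adjacency matrix. For $f:V\to\mathbb{R}$, $f\neq0$, the Rayleigh quotient is $R(f)=\frac{\sum_{\{x,y\}\in E}(f(x)-f(y))^2}{\sum_{x\in B}f(x)^2}$, interpreted as $+\infty$ if $f$ vanishes on $B$. For $1\le k\le|B|$, the $k$-th Steklov eigenvalue is $\sigma_k(G,B)=\min_{W\subseteq\mathbb{R}^V,\dim W=k}\max_{0\ne f\in W}R(f)$. *)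

(* Defs.v *)
From HB Require Import structures.
From mathcomp Require Import all_boot all_order all_algebra.
From mathcomp Require Import all_classical all_reals ereal.
Set Implicit Arguments. Unset Strict Implicit. Unset Printing Implicit Defensive.
Import Order.TTheory GRing.Theory Num.Theory.
Local Open Scope ring_scope.
Local Open Scope classical_set_scope.

(* Vertex set V = 'I_n; a finite simple undirected graph is a symmetric,
   irreflexive relation e on 'I_n.  Functions f : V -> R are row vectors
   'rV[R]_n. *)
Definition simple_graph n (e : rel 'I_n) : Prop :=
  symmetric e /\ irreflexive e.

Definition dirichlet {R : realType} n (e : rel 'I_n) (f : 'rV[R]_n) : R :=
  \sum_(x < n) \sum_(y < n | (x < y)%N && e x y) (f ord0 x - f ord0 y) ^+ 2.

Definition bnorm2 {R : realType} n (B : {set 'I_n}) (f : 'rV[R]_n) : R :=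
  \sum_(x in B) f ord0 x ^+ 2.

Definition rayleigh {R : realType} n (e : rel 'I_n) (B : {set 'I_n})
    (f : 'rV[R]_n) : \bar R :=
  if bnorm2 B f == 0 then +oo%E else (dirichlet e f / bnorm2 B f)%:E.

(* k-th Steklov eigenvalue: min over k-dimensional subspaces W of R^V
   (represented as row spaces of n x n matrices) of max_{0 <> f in W} R(f);
   written as inf/sup in the extended reals (min/max are attained). *)
Definition steklov {R : realType} n (e : rel 'I_n) (B : {set 'I_n}) (k : nat)
    : \bar R :=
  ereal_inf [set ereal_sup [set rayleigh e B f | f in
                 [set f : 'rV[R]_n | (f <= W)%MS /\ f != 0]]
            | W in [set W : 'M[R]_n | \rank W = k]].

Definition laplacian {R : realType} n (e : rel 'I_n) : 'M[R]_n :=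
  \matrix_(i, j) ((if i == j then #|[set y | e i y]|%:R else 0) - (e i j)%:R).

Definition bsub {R : realType} n (B : {set 'I_n}) (M : 'M[R]_n)
    : 'M[R]_#|B| :=
  \matrix_(i, j) M (enum_val i) (enum_val j).

Definition sorted_eigenvalues {R : realType} m (M : 'M[R]_m) (s : seq R) : Prop :=
  sorted <=%R s /\ char_poly M = \prod_(a <- s) ('X - a%:P).

(* Main.v *)
Require Import Defs.
From HB Require Import structures.
From mathcomp Require Import all_boot all_order all_algebra.
From mathcomp Require Import all_classical all_reals ereal.
Import Order.TTheory GRing.Theory Num.Theory.
Local Open Scope ring_scope.
From mathcomp Require Import ring lra zify.
Set Implicit Arguments. Unset Strict Implicit.

Lemma char_poly_simil (F : fieldType) n (P A B : 'M[F]_n) :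
  P \in unitmx -> P *m A = B *m P -> char_poly A = char_poly B.
Proof.
move=> Pu PA.
have h : map_mx polyC P *m char_poly_mx A = char_poly_mx B *m map_mx polyC P.
  by rewrite /char_poly_mx mulmxBr mulmxBl -!map_mxM PA scalar_mxC.
have /(congr1 determinant) := h.
rewrite !det_mulmx [X in _ = X]mulrC /char_poly.
apply: mulfI.
rewrite det_map_mx polyC_eq0 -unitfE -unitmxE //.
Qed.

Lemma char_poly_diag (F : fieldType) n (d : 'rV[F]_n) :
  char_poly (diag_mx d) = \prod_(i < n) ('X - (d 0 i)%:P).
Proof.
rewrite char_poly_trig ?diag_mx_is_trig //.
by apply: eq_bigr => i _; rewrite mxE eqxx mulr1n.
Qed.

Lemma eig_aux (F : fieldType) m (N : 'M[F]_m.+1) (S : 'M[F]_m.+1) (t : seq F) :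
  (S *m N <= S)%MS -> forall u : 'rV_m.+1, (u <= S)%MS -> u != 0 ->
  u *m horner_mx N (\prod_(a <- t) ('X - a%:P)) = 0 ->
  exists v : 'rV_m.+1, exists a, [/\ (v <= S)%MS, v != 0 & v *m N = a *: v].
Proof.
move=> SN; elim: t => [|a t IH] u uS u0.
  by rewrite big_nil rmorph1 mulmx1 => u00; rewrite u00 eqxx in u0.
rewrite big_cons rmorphM rmorphB /= horner_mx_X horner_mx_C mulmxA.
have [h|h] := eqVneq (u *m (N - a%:M)) 0.
  move=> _; exists u, a; split => //.
  by apply/eqP; rewrite -subr_eq0 -mul_mx_scalar -mulmxBr h.
apply: IH h.
rewrite mulmxBr mul_mx_scalar addmx_sub ?scalemx_sub //.
  exact: submx_trans (submxMr N uS) SN.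
by rewrite -scaleN1r !scalemx_sub.
Qed.

Lemma eig_in_sub (F : fieldType) m (N : 'M[F]_m) (s : seq F) (S : 'M[F]_m) :
  char_poly N = \prod_(a <- s) ('X - a%:P) -> (S *m N <= S)%MS -> S != 0 ->
  exists v : 'rV_m, exists a, [/\ (v <= S)%MS, v != 0 & v *m N = a *: v].
Proof.
case: m N S => [|m'] N S hc SN S0.
  by rewrite thinmx0 eqxx in S0.
have [i ri] : exists i, row i S != 0.
  apply/existsP; apply: contraR S0; rewrite negb_exists => /forallP h.
  by apply/eqP/row_matrixP => i; rewrite row0; apply/eqP; move: (h i); rewrite negbK.
apply: (@eig_aux F m' N S s SN _ (row_sub i S) ri).
by rewrite -hc Cayley_Hamilton mulmx0.
Qed.

Lemma dotE (R : comNzRingType) m (u v : 'rV[R]_m) :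
  (u *m v^T) 0 0 = \sum_k u 0 k * v 0 k.
Proof. by rewrite mxE; apply: eq_bigr => k _; rewrite mxE. Qed.

Lemma normsq_gt0 (R : realFieldType) m (v : 'rV[R]_m) :
  v != 0 -> 0 < (v *m v^T) 0 0.
Proof.
move=> v0; rewrite dotE lt0r sumr_ge0 ?andbT; last by move=> k _; rewrite -expr2 sqr_ge0.
apply: contra v0; rewrite psumr_eq0; last by move=> k _; rewrite -expr2 sqr_ge0.
move=> /allP h; apply/eqP/rowP => k; rewrite mxE.
by have := h k (mem_index_enum k); rewrite /= -expr2 sqrf_eq0 => /eqP.
Qed.

Definition Mof {R : Type} {m} r (w : nat -> 'rV[R]_m) : 'M[R]_(r, m) :=
  \matrix_(i < r, j < m) w i 0 j.

Lemma MofMT (R : comNzRingType) m r (w : nat -> 'rV[R]_m) (i j : 'I_r) :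
  (Mof r w *m (Mof r w)^T) i j = (w i *m (w j)^T) 0 0.
Proof. by rewrite dotE mxE; apply: eq_bigr => k _; rewrite !mxE. Qed.

Lemma orth_free (R : realFieldType) m r (w : nat -> 'rV[R]_m) :
  (forall i, (i < r)%N -> w i != 0) ->
  (forall i j, (i < r)%N -> (j < r)%N -> i != j -> (w i *m (w j)^T) 0 0 = 0) ->
  row_free (Mof r w).
Proof.
move=> nz orth; apply/row_freeP.
pose d : 'rV[R]_r := \row_i ((w i *m (w i)^T) 0 0)^-1.
have dE : forall j, d 0 j = ((w j *m (w j)^T) 0 0)^-1 by move=> j; rewrite mxE.
exists ((Mof r w)^T *m diag_mx d).
rewrite mulmxA mul_mx_diag; apply/matrixP => i j; rewrite mxE MofMT dE [RHS]mxE.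
have [->|ij] := eqVneq i j.
  by rewrite mulfV // gt_eqF // normsq_gt0 // nz.
by rewrite (orth i j) ?ltn_ord ?mxE ?mul0r.

Qed.

Lemma dotC (R : comNzRingType) m (u v : 'rV[R]_m) :
  (u *m v^T) 0 0 = (v *m u^T) 0 0.
Proof. by rewrite !dotE; apply: eq_bigr => k _; rewrite mulrC. Qed.

Lemma MofN (R : comNzRingType) m r (w : nat -> 'rV[R]_m) (l : nat -> R) (N : 'M[R]_m) :
  (forall i, (i < r)%N -> w i *m N = l i *: w i) ->
  Mof r w *m N = diag_mx (\row_(i < r) l i) *m Mof r w.
Proof.
move=> eig; rewrite mul_diag_mx; apply/matrixP => i j; rewrite !mxE.
have := congr1 (fun M : 'rV[R]_m => M 0 j) (eig i (ltn_ord i)); rewrite /= !mxE => <-.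
by apply: eq_bigr => k _; rewrite !mxE.
Qed.

Lemma orth_eigbasis (R : realFieldType) m (N : 'M[R]_m) (s : seq R) :
  N^T = N -> char_poly N = \prod_(a <- s) ('X - a%:P) ->
  forall r, (r <= m)%N -> exists w : nat -> 'rV[R]_m, exists l : nat -> R,
   [/\ forall i, (i < r)%N -> w i != 0,
       forall i, (i < r)%N -> w i *m N = l i *: w i &
       forall i j, (i < r)%N -> (j < r)%N -> i != j -> (w i *m (w j)^T) 0 0 = 0].
Proof.
move=> Nsym hc; elim=> [|r IH] rm.
  by exists (fun _ => 0), (fun _ => 0); split.
have [w [l [nz eig orth]]] := IH (ltnW rm).
pose M := Mof r w.
pose S := kermx M^T.
have S0 : S != 0.
  rewrite -mxrank_eq0 mxrank_ker mxrank_tr -lt0n subn_gt0.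
  exact: leq_ltn_trans (rank_leq_row M) rm.
have SN : (S *m N <= S)%MS.
  rewrite sub_kermx -mulmxA.
  have -> : N *m M^T = M^T *m diag_mx (\row_(i < r) l i).
    by rewrite -{1}Nsym -trmx_mul (@MofN _ _ _ w l) // trmx_mul tr_diag_mx.
  by rewrite mulmxA mulmx_ker mul0mx.
have [v [a [vS v0 va]]] := @eig_in_sub _ _ N s S hc SN S0.
have vM : forall i, (i < r)%N -> (v *m (w i)^T) 0 0 = 0.
  move=> i ir; move: vS; rewrite sub_kermx => /eqP/matrixP/(_ 0 (Ordinal ir)).
  have -> : (v *m M^T) 0 (Ordinal ir) = (v *m (w i)^T) 0 0.
    by rewrite !mxE; apply: eq_bigr => k _; rewrite !mxE.
  by move=> ->; rewrite mxE.
exists (fun i => if i == r then v else w i), (fun i => if i == r then a else l i).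
split.
- move=> i; rewrite ltnS leq_eqVlt; case: eqP => [_ //|_ /= ir]; exact: nz.
- move=> i; rewrite ltnS leq_eqVlt; case: eqP => [_ //|_ /= ir]; exact: eig.
- move=> i j; rewrite ltnS [(i <= r)%N]leq_eqVlt ltnS [(j <= r)%N]leq_eqVlt.
  case: (eqVneq i r) => [->|ir]; case: (eqVneq j r) => [->|jr].
  + by move=> _ _; rewrite ?eqxx.
  + rewrite ?eqxx ?(negbTE jr) /= => _ jr' _; exact: vM.
  + rewrite ?eqxx ?(negbTE ir) /= => ir' _ _; rewrite dotC; exact: vM.
  + rewrite ?(negbTE ir) ?(negbTE jr) /= => ir' jr'; exact: orth.
Qed.

Lemma quadform (R : comNzRingType) k (d g : 'rV[R]_k) :
  (d *m diag_mx g *m d^T) 0 0 = \sum_j d 0 j ^+ 2 * g 0 j.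
Proof.
rewrite mul_mx_diag mxE; apply: eq_bigr => j _; rewrite !mxE.
by rewrite expr2 mulrAC.
Qed.

Lemma diag_mulmx (R : comNzRingType) k (g h : 'rV[R]_k) :
  diag_mx g *m diag_mx h = diag_mx (\row_j (g 0 j * h 0 j)).
Proof.
apply/matrixP => i j; rewrite mul_diag_mx !mxE.
by case: eqVneq => [->|_]; rewrite ?mulr1n ?mulr0n ?mulr0.
Qed.

Lemma MMT (R : comNzRingType) m k (u : nat -> 'rV[R]_m) :
  (forall i j, (i < k)%N -> (j < k)%N -> i != j -> (u i *m (u j)^T) 0 0 = 0) ->
  Mof k u *m (Mof k u)^T = diag_mx (\row_(j < k) (u j *m (u j)^T) 0 0).
Proof.
move=> orth; apply/matrixP => i j; rewrite MofMT [RHS]mxE.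
case: eqVneq => [->|ij]; first by rewrite [RHS]mxE.
by rewrite mulr0n orth.
Qed.

Lemma quad_bound (R : realFieldType) m k (N : 'M[R]_m) (u : nat -> 'rV[R]_m)
    (lu : nat -> R) (c : R) :
  (forall j, (j < k)%N -> u j *m N = lu j *: u j) ->
  (forall j, (j < k)%N -> lu j <= c) ->
  (forall i j, (i < k)%N -> (j < k)%N -> i != j -> (u i *m (u j)^T) 0 0 = 0) ->
  forall d : 'rV[R]_k,
  ((d *m Mof k u) *m N *m (d *m Mof k u)^T) 0 0 <= c * ((d *m Mof k u) *m (d *m Mof k u)^T) 0 0.
Proof.
move=> eig le orth d.
have h1 := @MofN _ _ _ _ _ _ eig.
have h2 := @MMT _ _ _ _ orth.
pose lr := \row_(i < k) lu i.
pose qr := \row_(j < k) (u j *m (u j)^T) 0 0.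
have lrE : forall j, lr 0 j = lu j by move=> j; rewrite mxE.
have qrE : forall j, qr 0 j = (u j *m (u j)^T) 0 0 by move=> j; rewrite mxE.
have e1 : d *m Mof k u *m N *m (d *m Mof k u)^T =
  d *m diag_mx lr *m diag_mx qr *m d^T.
  by rewrite trmx_mul -(mulmxA d) h1 !mulmxA -(mulmxA (d *m _)) h2.
have e2 : d *m Mof k u *m (d *m Mof k u)^T = d *m diag_mx qr *m d^T.
  by rewrite trmx_mul !mulmxA -(mulmxA d) h2.
rewrite e1 e2 -(mulmxA d) diag_mulmx !quadform mulr_sumr.
apply: ler_sum => j _; rewrite mxE lrE qrE [c * _]mulrCA.
apply: ler_wpM2l; first by rewrite sqr_ge0.
rewrite ler_wpM2r ?le // ?ltn_ord //.
by rewrite dotE sumr_ge0 // => i _; rewrite -expr2 sqr_ge0.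
Qed.

Lemma double_sum (R : realType) n (G : 'I_n -> 'I_n -> R) :
  (forall x, G x x = 0) -> (forall x y, G x y = G y x) ->
  \sum_(x < n) \sum_(y < n) G x y = 2 * \sum_(x < n) \sum_(y < n | (x < y)%N) G x y.
Proof.
move=> G0 Gs.
have -> : \sum_x \sum_y G x y =
   \sum_x \sum_y (G x y * (x < y)%:R) + \sum_x \sum_y (G x y * (y < x)%:R).
  rewrite -big_split; apply: eq_bigr => x _; rewrite -big_split; apply: eq_bigr => y _ /=.
  case: (ltngtP x y) => [_|_|/val_inj->]; rewrite ?mulr1 ?mulr0 ?addr0 ?add0r //.
rewrite [X in _ + X]exchange_big /=.
have -> : \sum_j \sum_i (G i j * (j < i)%:R) = \sum_x \sum_y (G x y * (x < y)%:R).
  by apply: eq_bigr => x _; apply: eq_bigr => y _; rewrite Gs.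
rewrite -mulr2n mulr_natl; congr (_ *+ 2); apply: eq_bigr => x _.
rewrite [RHS]big_mkcond /=; apply: eq_bigr => y _; case: (x < y)%N; rewrite ?mulr1 ?mulr0 //.
Qed.

Lemma dirichletE (R : realType) n (e : rel 'I_n) (f : 'rV[R]_n) :
  simple_graph e -> dirichlet e f = (f *m laplacian e *m f^T) 0 0.
Proof.
move=> [esym eirr].
pose G x y : R := (e x y)%:R * (f 0 x - f 0 y) ^+ 2.
have D2 : 2 * dirichlet e f = \sum_x \sum_y G x y.
  rewrite double_sum; last first.
  - by move=> x y; rewrite /G esym -sqrrN opprB.
  - by move=> x; rewrite /G eirr mul0r.
  congr (_ * _); apply: eq_bigr => x _; rewrite [RHS]big_mkcond [LHS]big_mkcond.
  apply: eq_bigr => y _ /=; rewrite /G; case: (x < y)%N; case: (e x y) => //=.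
  by rewrite mul1r. by rewrite mul0r.
have Q : (f *m laplacian e *m f^T) 0 0 =
    \sum_x \sum_y (e x y)%:R * (f 0 x ^+ 2 - f 0 x * f 0 y).
  have mE : forall i y, (y \in [set y | e i y]%classic) = e i y.
    by move=> i y; apply/idP/idP; rewrite in_setE.
  have deg : forall i, (#|[set y | e i y]%classic|%:R : R) = \sum_j (e i j)%:R.
    move=> i; rewrite -sum1_card natr_sum [RHS](bigID (fun j => e i j)) /=.
    rewrite [X in _ = _ + X]big1 ?addr0; last by move=> j /negbTE ->.
    by apply: eq_big => j; rewrite ?mE // => ->.
  rewrite mxE.
  have -> : \sum_j (f *m laplacian e) 0 j * f^T j 0 =
     \sum_j \sum_i f 0 i * laplacian e i j * f 0 j.
    apply: eq_bigr => j _; rewrite mxE mulr_suml; apply: eq_bigr => i _.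
    by rewrite !mxE.
  rewrite exchange_big /=; apply: eq_bigr => i _.
  have -> : \sum_j f 0 i * laplacian e i j * f 0 j =
     \sum_j ((i == j)%:R * (f 0 i * #|[set y | e i y]%classic|%:R * f 0 j) - (e i j)%:R * (f 0 i * f 0 j)).
    apply: eq_bigr => j _; rewrite mxE.
    by case: eqVneq => [->|_]; rewrite ?eqxx /= ?mul1r ?mul0r ?mulr0 ?sub0r ?subr0; ring.
  rewrite sumrB (bigD1 i) //= big1 ?addr0; last by move=> j /negbTE; rewrite eq_sym => ->; rewrite mul0r.
  rewrite eqxx mul1r deg.
  under [RHS]eq_bigr do rewrite mulrBr.
  rewrite sumrB; congr (_ - _).
  rewrite [LHS](_ : _ = (\sum_j (e i j)%:R) * (f 0 i ^+ 2)); last by ring.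
  by rewrite mulr_suml.
have Q2 : \sum_x \sum_y (e x y)%:R * (f 0 x ^+ 2 - f 0 x * f 0 y) =
          \sum_x \sum_y (e x y)%:R * (f 0 y ^+ 2 - f 0 x * f 0 y).
  rewrite exchange_big /=; apply: eq_bigr => x _; apply: eq_bigr => y _.
  by rewrite esym (mulrC (f 0 y)).
have S : \sum_x \sum_y G x y =
   \sum_x \sum_y (e x y)%:R * (f 0 x ^+ 2 - f 0 x * f 0 y) +
   \sum_x \sum_y (e x y)%:R * (f 0 y ^+ 2 - f 0 x * f 0 y).
  rewrite -big_split; apply: eq_bigr => x _; rewrite -big_split; apply: eq_bigr => y _.
  rewrite /G /=; ring.
rewrite Q; apply: (@mulfI _ 2); first by rewrite pnatr_eq0.
by rewrite D2 S -Q2 mulr2n mulrDl mul1r.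
Qed.

Definition Emb {R : realType} {n} (B : {set 'I_n}) : 'M[R]_(#|B|, n) :=
  \matrix_(i, v) (enum_val i == v)%:R.

Lemma EmbM (R : realType) n (B : {set 'I_n}) p (A : 'M[R]_(n, p)) i w :
  (Emb B *m A) i w = A (enum_val i) w.
Proof.
rewrite mxE (bigD1 (enum_val i)) //= big1 => [|v vi]; rewrite !mxE ?eqxx ?mul1r ?addr0 //.
by rewrite eq_sym (negbTE vi) mul0r.
Qed.

Lemma EmbT (R : realType) n (B : {set 'I_n}) : Emb B *m (Emb B)^T = 1%:M :> 'M[R]_#|B|.
Proof.
apply/matrixP => i j; rewrite EmbM !mxE; congr (_ %:R).
by rewrite (inj_eq enum_val_inj) eq_sym.
Qed.

Lemma Emb_free (R : realType) n (B : {set 'I_n}) : row_free (Emb (R := R) B).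
Proof. by apply/row_freeP; exists (Emb B)^T; exact: EmbT. Qed.

Lemma bsubE (R : realType) n (B : {set 'I_n}) (L : 'M[R]_n) :
  bsub B L = Emb B *m L *m (Emb B)^T.
Proof.
apply/matrixP => i j; rewrite -mulmxA EmbM !mxE.
rewrite (bigD1 (enum_val j)) //= big1 => [|k kj]; rewrite !mxE ?eqxx ?mulr1 ?addr0 //.
by rewrite eq_sym (negbTE kj) mulr0.
Qed.

Lemma yE_at (R : realType) n (B : {set 'I_n}) (y : 'rV[R]_#|B|) i :
  (y *m Emb B) 0 (enum_val i) = y 0 i.
Proof.
rewrite mxE (bigD1 i) //= big1 => [|j ji]; rewrite !mxE ?eqxx ?mulr1 ?addr0 //.
by rewrite (inj_eq enum_val_inj) (negbTE ji) mulr0.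
Qed.

Lemma bnorm2E (R : realType) n (B : {set 'I_n}) (y : 'rV[R]_#|B|) :
  bnorm2 B (y *m Emb B) = (y *m y^T) 0 0.
Proof.
rewrite /bnorm2 big_enum_val dotE; apply: eq_bigr => i _.
by rewrite yE_at expr2.
Qed.

Lemma lap_sym (R : realType) n (e : rel 'I_n) : symmetric e ->
  (laplacian (R := R) e)^T = laplacian e.
Proof.
move=> esym; apply/matrixP => i j; rewrite !mxE eq_sym esym.
by case: eqVneq => // ->.
Qed.

Unset Implicit Arguments.
Theorem mainTheorem4 (R : realType) (n : nat) (e : rel 'I_n)
    (B : {set 'I_n}) (mu : seq R) :
  simple_graph e -> (2 <= #|B|)%N ->
  sorted_eigenvalues (bsub B (laplacian (R := R) e)) mu ->
  forall k : nat, (1 <= k <= #|B|)%N ->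
    (steklov (R := R) e B k <= (nth 0 mu k.-1)%:E)%E.
Proof.
move=> [esym eirr] B2 [mus hmu] k /andP [k1 km].
set m := #|B| in km hmu *.
set Nb := bsub B (laplacian (R := R) e) in hmu *.
have Nsym : Nb^T = Nb.
  apply/matrixP => i j; rewrite /Nb !mxE (eq_sym (enum_val j)) esym.
  by case: eqP => [->|].
have [w [l [nz eig orth]]] := orth_eigbasis Nsym hmu (leqnn m).
pose ls := [seq l i | i <- iota 0 m].
have pls : perm_eq ls mu.
  apply: prod_XsubC_eq; rewrite -hmu.
  have Mu : Mof m w \in unitmx by rewrite -row_free_unit orth_free.
  rewrite (char_poly_simil Mu (MofN eig)) char_poly_diag big_map.
  have -> : iota 0 m = index_iota 0 m by rewrite /index_iota subn0.
  rewrite big_mkord.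
  by apply: eq_bigr => i _; rewrite mxE.
have szmu : size mu = m.
  by have := size_prod_XsubC mu id; rewrite -hmu size_char_poly => -[].
pose c := nth 0 mu k.-1.
have cnt_mu : (k <= count (fun x : R => (x <= c)%R) mu)%N.
  have -> : mu = take k mu ++ drop k mu by rewrite cat_take_drop.
  rewrite count_cat; apply: leq_trans (leq_addr _ _).
  have szt : size (take k mu) = k by rewrite size_take szmu; case: ltngtP km.
  rewrite -{1}szt; apply: eq_leq; symmetry; apply/eqP; rewrite -all_count; apply/allP => x /(nthP 0) [i ilt <-].
  rewrite szt in ilt; rewrite nth_take // /c.
  apply: (le_sorted_leq_nth 0 mus); rewrite ?inE ?szmu //; try lia.
have cnt_ls : (k <= count (fun x : R => (x <= c)%R) ls)%N by rewrite (permP pls).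
pose I := [seq i <- iota 0 m | (l i <= c)%R].
have szI : (k <= size I)%N by rewrite size_filter; move: cnt_ls; rewrite count_map.
have Iu : uniq I by rewrite filter_uniq // iota_uniq.
have Imem : forall j, (j < size I)%N -> (nth 0%N I j < m)%N /\ (l (nth 0%N I j) <= c)%R.
  move=> j jI; have := mem_nth 0%N jI; rewrite mem_filter mem_iota add0n.
  by move=> /andP [-> /andP [_ ->]].
pose u j := w (nth 0%N I j).
pose lu j := l (nth 0%N I j).
have ueig : forall j, (j < k)%N -> u j *m Nb = lu j *: u j.
  move=> j jk; apply: eig; exact: (Imem j (leq_trans jk szI)).1.
have ule : forall j, (j < k)%N -> (lu j <= c)%R.
  move=> j jk; exact: (Imem j (leq_trans jk szI)).2.
have unz : forall j, (j < k)%N -> u j != 0.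
  move=> j jk; apply: nz; exact: (Imem j (leq_trans jk szI)).1.
have uorth : forall i j, (i < k)%N -> (j < k)%N -> i != j -> (u i *m (u j)^T) 0 0 = 0.
  move=> i j ik jk ij; apply: orth.
  - exact: (Imem i (leq_trans ik szI)).1.
  - exact: (Imem j (leq_trans jk szI)).1.
  - by rewrite nth_uniq // ?(leq_trans ik szI) ?(leq_trans jk szI).
pose W : 'M[R]_n := <<Mof k u *m Emb B>>%MS.
have rW : \rank W = k.
  rewrite mxrank_gen mxrankMfree ?Emb_free //; apply/eqP; exact: orth_free.
rewrite /steklov.
apply: (@le_trans _ _ (ereal_sup [set rayleigh e B f | f in
                 [set f : 'rV[R]_n | (f <= W)%MS /\ (f != 0)%R]]%classic)).
  by apply: ereal_inf_lbound; exists W.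
apply: ge_ereal_sup => _ [f [fW f0] <-].
rewrite genmxE in fW.
case/submxP: fW => D fE.
set y0 := D *m Mof k u.
have fy : f = y0 *m Emb B by rewrite fE mulmxA.
have y0nz : y0 != 0 by apply: contra f0 => /eqP y00; rewrite fy y00 mul0mx.
have pos := normsq_gt0 y0nz.
rewrite /rayleigh fy bnorm2E gt_eqF // lee_fin dirichletE //.
have -> : y0 *m Emb B *m laplacian e *m (y0 *m Emb B)^T = y0 *m Nb *m y0^T.
  by rewrite /Nb bsubE trmx_mul !mulmxA.
rewrite ler_pdivrMr //.
exact: quad_bound ueig ule uorth D.
Qed.
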